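(* Let $\mathcal{A}$ be a topological ring, let $\mathcal{B}$ be a topological $\mathcal{A}$-algebra and let $c\colon\mathcal{B}\to\widehat{\mathcal{B}}$ be the separated completion of $\mathcal{B}$. Then for every continuous iterated higher $\mathcal{A}$-derivation $D=\{D^{(i)}\}_{i\ge0}$ of $\mathcal{B}$ there exists a unique continuous iterated higher $\mathcal{A}$-derivation $\widehat{D}=\{\widehat{D}^{(i)}\}_{i\ge0}$ of $\widehat{\mathcal{B}}$ such that $\widehat{D}^{(i)}\circ c=c\circ D^{(i)}$ for every $i\ge0$. Furthermore, if $D$ is topologically integrable, then so is $\widehat{D}$.
   Context: Conventions: topological rings are linearly topologized with a countable fundamental system of open ideals; homomorphisms are continuous; a topological $\mathcal{A}$-algebra is a topological ring with a continuous homomorphism from $\mathcal{A}$. The separated completion is $\widehat{\mathcal{B}}=\varprojlim_{\mathfrak{b}}\mathcal{B}/\mathfrak{b}$ over open ideals (quotients discrete) with inverse limit topology, and $c$ the canonical map. A continuous iterated higher $\mathcal{A}$-derivation of $\mathcal{B}$ is a family $\{D^{(i)}\}_{i\ge0}$ of continuous $\mathcal{A}$-module homomorphisms $\mathcal{B}\to\mathcal{B}$ with $D^{(0)}=\mathrm{id}$, $D^{(i)}(bb')=\sum_{j=0}^iD^{(j)}(b)D^{(i-j)}(b')$, and $D^{(i)}\circ D^{(j)}=\binom{i+j}{i}D^{(i+j)}$. It is topologically integrable if $(D^{(i)})_i$ converges continuously to $0$: for every $b$ and every open ideal $\mathfrak{b}'$ there exist an open ideal $\mathfrak{b}$ and $n_0$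 with $D^{(n)}(b+\mathfrak{b})\subseteq\mathfrak{b}'$ for all $n\ge n_0$. *)

(* Defs.v *)
From HB Require Import structures.
From mathcomp Require Import all_boot all_order all_algebra.
From mathcomp Require Import boolp classical_sets ring.
Set Implicit Arguments.
Unset Strict Implicit.
Unset Printing Implicit Defensive.
Import Order.TTheory GRing.Theory.
Local Open Scope classical_set_scope.
Local Open Scope ring_scope.

Definition is_ideal (R : comPzRingType) (I : set R) : Prop :=
  I 0 /\ (forall x y, I x -> I y -> I (x + y)) /\ (forall r x, I x -> I (r * x)).

(** [N] is a countable fundamental system of open ideals defining a linear
    topology on [R]: the [N n] are ideals, and the family is directed
    (any two contain a third).  The topology is the one for which the open
    sets are the unions of cosets [x + N n]; hence a subset is a
    neighbourhood of [x] iff it contains some [x + N n]. *)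
Definition lin_top (R : comPzRingType) (N : nat -> set R) : Prop :=
  (forall n, is_ideal (N n)) /\ (forall m n, exists k, N k `<=` N m `&` N n).

Definition open_ideal (R : comPzRingType) (N : nat -> set R) (b : set R) : Prop :=
  is_ideal b /\ exists n, N n `<=` b.

Definition lcontinuous (R S : comPzRingType) (NR : nat -> set R) (NS : nat -> set S)
    (f : R -> S) : Prop :=
  forall x b', open_ideal NS b' ->
    exists b, open_ideal NR b /\ forall y, b (y - x) -> b' (f y - f x).

(** * Continuous iterated higher A-derivations
    [phi : A -> R] is the structure map of the A-algebra [R]; the A-module
    structure on [R] is [a . x = phi a * x]. *)
Definition iter_higher_der (A R : comPzRingType) (phi : A -> R) (D : nat -> R -> R) : Prop :=
  (forall i x y, D i (x + y) = D i x + D i y) /\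
  (forall i a x, D i (phi a * x) = phi a * D i x) /\
  (forall x, D 0%N x = x) /\
  (forall i x y, D i (x * y) = \sum_(j < i.+1) D j x * D (i - j)%N y) /\
  (forall i j x, D i (D j x) = D (i + j)%N x *+ 'C(i + j, i)).

Definition cont_iter_higher_der (A R : comPzRingType) (N : nat -> set R)
    (phi : A -> R) (D : nat -> R -> R) : Prop :=
  iter_higher_der phi D /\ forall i, lcontinuous N N (D i).

(** Topological integrability: (D^(i))_i converges continuously to 0. *)
Definition top_integrable (R : comPzRingType) (N : nat -> set R) (D : nat -> R -> R) : Prop :=
  forall x b', open_ideal N b' ->
    exists b n0, open_ideal N b /\
      forall n y, (n0 <= n)%N -> b (y - x) -> b' (D n y).

(** * The separated completion  \hat R = lim_{b open ideal} R / b
    An element of R/b is represented by the coset (a subset of R); an element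
    of the inverse limit is a family [xi] indexed by the open ideals [b], with
    [xi b] a coset of [b], compatible with the transition maps R/b -> R/b'
    for [b <= b'] (i.e. [xi b] is contained in [xi b']).  For sets [b] that are
    not open ideals we put [xi b = set0] so that equality is extensional. *)
Definition coset (R : comPzRingType) (x : R) (b : set R) : set R := [set y | b (y - x)].

Definition cpl_ax (R : comPzRingType) (N : nat -> set R) (xi : set R -> set R) : Prop :=
  (forall b, ~ open_ideal N b -> xi b = set0) /\
  (forall b, open_ideal N b -> exists x, xi b = coset x b) /\
  (forall b b', open_ideal N b -> open_ideal N b' -> b `<=` b' -> xi b `<=` xi b').

Record completion (R : comPzRingType) (N : nat -> set R) := Cpl {
  cval : set R -> set R;
  cvalP : cpl_ax N cval }.

HB.instance Definition _ (R : comPzRingType) (N : nat -> set R) :=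
  gen_eqMixin (completion N).
HB.instance Definition _ (R : comPzRingType) (N : nat -> set R) :=
  gen_choiceMixin (completion N).

Lemma ideal0 (R : comPzRingType) (I : set R) : is_ideal I -> I 0.
Proof. by case. Qed.

Lemma idealD (R : comPzRingType) (I : set R) x y : is_ideal I -> I x -> I y -> I (x + y).
Proof. by case=> _ [+ _]; apply. Qed.

Lemma idealM (R : comPzRingType) (I : set R) r x : is_ideal I -> I x -> I (r * x).
Proof. by case=> _ [_]; apply. Qed.

Lemma idealN (R : comPzRingType) (I : set R) x : is_ideal I -> I x -> I (- x).
Proof. by move=> hI hx; rewrite -mulN1r; apply: idealM. Qed.

Lemma idealB (R : comPzRingType) (I : set R) x y : is_ideal I -> I x -> I y -> I (x - y).
Proof. by move=> hI hx hy; apply: idealD => //; apply: idealN. Qed.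

Definition compat2 (R : comPzRingType) (f : R -> R -> R) : Prop :=
  forall (I : set R) x x' y y', is_ideal I -> I (x - x') -> I (y - y') ->
    I (f x y - f x' y').

Lemma compat_add (R : comPzRingType) : compat2 (fun x y : R => x + y).
Proof.
move=> I x x' y y' hI hx hy.
have -> : x + y - (x' + y') = (x - x') + (y - y') by ring.
exact: idealD.
Qed.

Lemma compat_mul (R : comPzRingType) : compat2 (fun x y : R => x * y).
Proof.
move=> I x x' y y' hI hx hy.
have -> : x * y - x' * y' = x * (y - y') + y' * (x - x').
  by ring.
by apply: idealD => //; apply: idealM.
Qed.

Lemma compat_opp (R : comPzRingType) : compat2 (fun x _ : R => - x).
Proof. by move=> I x x' y y' hI hx _; rewrite -opprD; apply: idealN. Qed.

Definition lift0_fun (R : comPzRingType) (N : nat -> set R) (c : R) : set R -> set R :=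
  fun b => [set z | open_ideal N b /\ b (z - c)].

Lemma lift0_ax (R : comPzRingType) (N : nat -> set R) (c : R) : cpl_ax N (lift0_fun N c).
Proof.
split; [|split].
- by move=> b nb; apply/seteqP; split => z //= [].
- move=> b ob; exists c; apply/seteqP; split => z /=; first by case.
  by move=> h; split.
- by move=> b b' ob ob' sbb' z [_ h]; split => //; apply: sbb'.
Qed.

Definition lift0 (R : comPzRingType) (N : nat -> set R) (c : R) : completion N :=
  Cpl (lift0_ax N c).

Definition lift2_fun (R : comPzRingType) (N : nat -> set R) (f : R -> R -> R)
    (xi eta : completion N) : set R -> set R :=
  fun b => [set z | exists x y, cval xi b x /\ cval eta b y /\ b (z - f x y)].

Lemma cval_ex (R : comPzRingType) (N : nat -> set R) (xi : completion N) b :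
  open_ideal N b -> exists x, cval xi b x.
Proof.
move=> ob; have [_ [h _]] := cvalP xi; have [x ->] := h b ob.
by exists x; rewrite /coset /= subrr; apply: ideal0; case: ob.
Qed.

Lemma cval_diff (R : comPzRingType) (N : nat -> set R) (xi : completion N) b x y :
  open_ideal N b -> cval xi b x -> cval xi b y -> b (x - y).
Proof.
move=> ob; have [_ [h _]] := cvalP xi; have [c ->] := h b ob.
rewrite /coset /= => hx hy.
have -> : x - y = (x - c) - (y - c) by ring.
by apply: idealB => //; case: ob.
Qed.

Lemma cval_open (R : comPzRingType) (N : nat -> set R) (xi : completion N) b x :
  cval xi b x -> open_ideal N b.
Proof.
move=> hx; apply: contrapT => nb; have [h _] := cvalP xi.
by move: hx; rewrite (h b nb).
Qed.

Lemma lift2_ax (R : comPzRingType) (N : nat -> set R) (f : R -> R -> R)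
    (xi eta : completion N) : compat2 f -> cpl_ax N (lift2_fun f xi eta).
Proof.
move=> cf; split; [|split].
- move=> b nb; apply/seteqP; split => z //= [x [y [hx _]]].
  by apply: nb; apply: cval_open hx.
- move=> b ob; have [x0 hx0] := cval_ex xi ob; have [y0 hy0] := cval_ex eta ob.
  have hb : is_ideal b by case: ob.
  exists (f x0 y0); apply/seteqP; split => z /=.
  + move=> [x [y [hx [hy hz]]]]; rewrite /coset /=.
    have -> : z - f x0 y0 = (z - f x y) + (f x y - f x0 y0)
      by rewrite addrA subrK.
    apply: idealD => //; apply: cf => //.
    * exact: (cval_diff ob hx hx0).
    * exact: (cval_diff ob hy hy0).
  + by move=> hz; exists x0, y0.
- move=> b b' ob ob' sbb' z [x [y [hx [hy hz]]]].
  have [_ [_ h]] := cvalP xi; have [_ [_ h']] := cvalP eta.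
  by exists x, y; split; [apply: (h b b') | split; [apply: (h' b b') | apply: sbb']].
Qed.

Lemma cpl_ext (R : comPzRingType) (N : nat -> set R) (xi eta : completion N) :
  (forall b, open_ideal N b -> exists z, cval xi b z /\ cval eta b z) -> xi = eta.
Proof.
case: xi => f hf; case: eta => g hg /= H.
have efg : f = g.
  apply: funext => b.
  have [ob | nb] := pselect (open_ideal N b); last first.
  - by have [hf0 _] := hf; have [hg0 _] := hg; rewrite hf0 // hg0.
  - have [z [hzf hzg]] := H b ob.
    case: (hf) => _ [/(_ b ob) [x ex] _]; case: (hg) => _ [/(_ b ob) [y ey] _].
    have hb : is_ideal b by case: ob.
    move: hzf hzg; rewrite ex ey /coset /= => hzx hzy.
    apply/seteqP; split => w /= hw.
    + have -> : w - y = (w - x) - (z - x) + (z - y)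
        by ring.
      by apply: idealD => //; apply: idealB.
    + have -> : w - x = (w - y) - (z - y) + (z - x)
        by ring.
      by apply: idealD => //; apply: idealB.
subst g; congr Cpl; exact: Prop_irrelevance.
Qed.

Definition cadd (R : comPzRingType) (N : nat -> set R) (xi eta : completion N) :=
  Cpl (lift2_ax xi eta (@compat_add R)).
Definition cmul (R : comPzRingType) (N : nat -> set R) (xi eta : completion N) :=
  Cpl (lift2_ax xi eta (@compat_mul R)).
Definition copp (R : comPzRingType) (N : nat -> set R) (xi : completion N) :=
  Cpl (lift2_ax xi xi (@compat_opp R)).

Lemma mem_lift0 (R : comPzRingType) (N : nat -> set R) (c : R) b :
  open_ideal N b -> cval (lift0 N c) b c.
Proof. by move=> ob; split => //; rewrite subrr; apply: ideal0; case: ob. Qed.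

Lemma mem_lift2 (R : comPzRingType) (N : nat -> set R) (f : R -> R -> R)
  (cf : compat2 f) (xi eta : completion N) b x y :
  open_ideal N b -> cval xi b x -> cval eta b y ->
  cval (Cpl (lift2_ax xi eta cf)) b (f x y).
Proof.
by move=> ob hx hy; exists x, y; do 2!split => //; rewrite subrr; apply: ideal0; case: ob.
Qed.

Lemma mem_cadd (R : comPzRingType) (N : nat -> set R) (xi eta : completion N) b x y :
  open_ideal N b -> cval xi b x -> cval eta b y -> cval (cadd xi eta) b (x + y).
Proof. exact: mem_lift2. Qed.
Lemma mem_cmul (R : comPzRingType) (N : nat -> set R) (xi eta : completion N) b x y :
  open_ideal N b -> cval xi b x -> cval eta b y -> cval (cmul xi eta) b (x * y).
Proof. exact: mem_lift2. Qed.
Lemma mem_copp (R : comPzRingType) (N : nat -> set R) (xi : completion N) b x :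
  open_ideal N b -> cval xi b x -> cval (copp xi) b (- x).
Proof. by move=> ob hx; exact: (@mem_lift2 R N (fun x _ => - x) (@compat_opp R) xi xi b x x ob hx hx). Qed.

Lemma caddA (R : comPzRingType) (N : nat -> set R) : associative (@cadd R N).
Proof.
move=> a b c; apply: cpl_ext => I oI.
have [x hx] := cval_ex a oI; have [y hy] := cval_ex b oI; have [z hz] := cval_ex c oI.
exists (x + (y + z)); split; first by do !apply: mem_cadd.
by rewrite addrA; do !apply: mem_cadd.
Qed.

Lemma caddC (R : comPzRingType) (N : nat -> set R) : commutative (@cadd R N).
Proof.
move=> a b; apply: cpl_ext => I oI.
have [x hx] := cval_ex a oI; have [y hy] := cval_ex b oI.
exists (x + y); split; first by apply: mem_cadd.
by rewrite addrC; apply: mem_cadd.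
Qed.

Lemma cadd0 (R : comPzRingType) (N : nat -> set R) : left_id (lift0 N 0) (@cadd R N).
Proof.
move=> a; apply: cpl_ext => I oI.
have [x hx] := cval_ex a oI.
exists (0 + x); split; first by apply: mem_cadd => //; apply: mem_lift0.
by rewrite add0r.
Qed.

Lemma caddN (R : comPzRingType) (N : nat -> set R) : left_inverse (lift0 N 0) (@copp R N) (@cadd R N).
Proof.
move=> a; apply: cpl_ext => I oI.
have [x hx] := cval_ex a oI.
exists (- x + x); split; first by apply: mem_cadd => //; apply: mem_copp.
by rewrite addNr; apply: mem_lift0.
Qed.

HB.instance Definition _ (R : comPzRingType) (N : nat -> set R) :=
  GRing.isZmodule.Build (completion N) (@caddA R N) (@caddC R N) (@cadd0 R N) (@caddN R N).

Lemma cmulA (R : comPzRingType) (N : nat -> set R) : associative (@cmul R N).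
Proof.
move=> a b c; apply: cpl_ext => I oI.
have [x hx] := cval_ex a oI; have [y hy] := cval_ex b oI; have [z hz] := cval_ex c oI.
exists (x * (y * z)); split; first by do !apply: mem_cmul.
by rewrite mulrA; do !apply: mem_cmul.
Qed.

Lemma cmulC (R : comPzRingType) (N : nat -> set R) : commutative (@cmul R N).
Proof.
move=> a b; apply: cpl_ext => I oI.
have [x hx] := cval_ex a oI; have [y hy] := cval_ex b oI.
exists (x * y); split; first by apply: mem_cmul.
by rewrite mulrC; apply: mem_cmul.
Qed.

Lemma cmul1 (R : comPzRingType) (N : nat -> set R) : left_id (lift0 N 1) (@cmul R N).
Proof.
move=> a; apply: cpl_ext => I oI.
have [x hx] := cval_ex a oI.
exists (1 * x); split; first by apply: mem_cmul => //; apply: mem_lift0.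
by rewrite mul1r.
Qed.

Lemma cmulDl (R : comPzRingType) (N : nat -> set R) :
  left_distributive (@cmul R N) (@cadd R N).
Proof.
move=> a b c; apply: cpl_ext => I oI.
have [x hx] := cval_ex a oI; have [y hy] := cval_ex b oI; have [z hz] := cval_ex c oI.
exists ((x + y) * z); split; first by do !(apply: mem_cmul || apply: mem_cadd).
by rewrite mulrDl; do !(apply: mem_cmul || apply: mem_cadd).
Qed.

HB.instance Definition _ (R : comPzRingType) (N : nat -> set R) :=
  GRing.Zmodule_isComPzRing.Build (completion N) (@cmulA R N) (@cmulC R N)
    (@cmul1 R N) (@cmulDl R N).

Definition cpl_map (R : comPzRingType) (N : nat -> set R) (x : R) : completion N :=
  lift0 N x.

(** Fundamental system of open ideals of \hat R for the inverse limit topology: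
    the kernels of the projections \hat R -> R / N n. *)
Definition cpl_nbhd (R : comPzRingType) (N : nat -> set R) (n : nat) : set (completion N) :=
  [set xi | cval xi (N n) 0].

Arguments cpl_map {R} N x.
Arguments cpl_nbhd {R} N n.

(* Main.v *)
Require Import Defs.
From HB Require Import structures.
From mathcomp Require Import all_boot all_order all_algebra.
From mathcomp Require Import boolp classical_sets ring.
Set Implicit Arguments.
Unset Strict Implicit.
Unset Printing Implicit Defensive.
Import Order.TTheory GRing.Theory.
Local Open Scope classical_set_scope.
Local Open Scope ring_scope.

Lemma oi_N (B : comPzRingType) (N : nat -> set B) (hB : lin_top N) n :
  open_ideal N (N n).
Proof. by split; [case: hB | exists n]. Qed.

Lemma refine_oi (B : comPzRingType) (N : nat -> set B) (hB : lin_top N) b1 b2 :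
  open_ideal N b1 -> open_ideal N b2 -> exists k, N k `<=` b1 /\ N k `<=` b2.
Proof.
move=> [_ [m hm]] [_ [n hn]]; have [_ hd] := hB; have [k hk] := hd m n.
by exists k; split => z /hk [/hm ? /hn ?].
Qed.

Lemma cval_mono (B : comPzRingType) (N : nat -> set B) (xi : completion N) b b' x :
  open_ideal N b -> open_ideal N b' -> b `<=` b' -> cval xi b x -> cval xi b' x.
Proof. by move=> ob ob' s; have [_ [_ h]] := cvalP xi; apply: h. Qed.

Lemma cval_shift (B : comPzRingType) (N : nat -> set B) (xi : completion N) b x z :
  cval xi b x -> b (z - x) -> cval xi b z.
Proof.
move=> hx hz; have ob := cval_open hx; have [_ [h _]] := cvalP xi.
have [c ec] := h b ob; move: hx; rewrite ec /coset /= => hx.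
have -> : z - c = (z - x) + (x - c) by ring.
by apply: idealD => //; case: ob.
Qed.

Lemma memD (B : comPzRingType) (N : nat -> set B) (xi eta : completion N) b x y :
  open_ideal N b -> cval xi b x -> cval eta b y -> cval (xi + eta) b (x + y).
Proof. exact: mem_cadd. Qed.
Lemma memM (B : comPzRingType) (N : nat -> set B) (xi eta : completion N) b x y :
  open_ideal N b -> cval xi b x -> cval eta b y -> cval (xi * eta) b (x * y).
Proof. exact: mem_cmul. Qed.
Lemma memN (B : comPzRingType) (N : nat -> set B) (xi : completion N) b x :
  open_ideal N b -> cval xi b x -> cval (- xi) b (- x).
Proof. exact: mem_copp. Qed.
Lemma mem0 (B : comPzRingType) (N : nat -> set B) b :
  open_ideal N b -> cval (0 : completion N) b 0.
Proof. exact: mem_lift0. Qed.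
Lemma memc (B : comPzRingType) (N : nat -> set B) b x :
  open_ideal N b -> cval (cpl_map N x) b x.
Proof. exact: mem_lift0. Qed.

Lemma memB (B : comPzRingType) (N : nat -> set B) (xi eta : completion N) b x y :
  open_ideal N b -> cval xi b x -> cval eta b y -> cval (xi - eta) b (x - y).
Proof. by move=> ob hx hy; apply: memD => //; apply: memN. Qed.

Lemma sub_cval (B : comPzRingType) (N : nat -> set B) (xi eta : completion N) b x y :
  cval (eta - xi) b 0 -> cval eta b y -> cval xi b x -> b (y - x).
Proof.
move=> h hy hx; have ob := cval_open h.
have := cval_diff ob (memB ob hy hx) h; by rewrite subr0.
Qed.

Lemma mem_sum (B : comPzRingType) (N : nat -> set B) n (F : 'I_n -> completion N)
  (f : 'I_n -> B) b : open_ideal N b -> (forall j, cval (F j) b (f j)) ->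
  cval (\sum_(j < n) F j) b (\sum_(j < n) f j).
Proof.
move=> ob hF; apply: (big_rec2 (fun s S => cval S b s)); first exact: mem0.
by move=> j y1 y2 _ h; apply: memD.
Qed.

Lemma mem_muln (B : comPzRingType) (N : nat -> set B) (xi : completion N) b x n :
  open_ideal N b -> cval xi b x -> cval (xi *+ n) b (x *+ n).
Proof.
move=> ob hx; elim: n => [|n IH]; first by rewrite !mulr0n; apply: mem0.
by rewrite !mulrS; apply: memD.
Qed.

Lemma cn_ideal (B : comPzRingType) (N : nat -> set B) (hB : lin_top N) n :
  is_ideal (cpl_nbhd N n).
Proof.
have on := oi_N hB n; rewrite /cpl_nbhd; split; [|split] => /=.
- exact: mem0.
- by move=> x y hx hy; rewrite -(addr0 0); apply: memD.
- move=> r x hx; have [y hy] := cval_ex r on; rewrite -(mulr0 y); exact: memM.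
Qed.

Lemma cn_open (B : comPzRingType) (N : nat -> set B) (hB : lin_top N) n :
  open_ideal (cpl_nbhd N) (cpl_nbhd N n).
Proof. by split; [apply: cn_ideal | exists n]. Qed.

Lemma cn_mono (B : comPzRingType) (N : nat -> set B) (hB : lin_top N) k m :
  N k `<=` N m -> cpl_nbhd N k `<=` cpl_nbhd N m.
Proof. by move=> s z; rewrite /cpl_nbhd /=; apply: cval_mono => //; apply: oi_N. Qed.

Lemma Dadd0 (B : comPzRingType) (D : B -> B) (hadd : forall x y, D (x + y) = D x + D y) :
  D 0 = 0.
Proof. have := hadd 0 0; rewrite addr0 => h; apply: (addrI (D 0)); by rewrite addr0 -h. Qed.

Lemma DaddB (B : comPzRingType) (D : B -> B) (hadd : forall x y, D (x + y) = D x + D y) x y :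
  D (x - y) = D x - D y.
Proof.
have hN : D (- y) = - D y.
  by apply: (addrI (D y)); rewrite -hadd !subrr (Dadd0 hadd).
by rewrite hadd hN.
Qed.

Definition Dh_fun (B : comPzRingType) (N : nat -> set B) (D : B -> B) (xi : completion N) :
  set B -> set B :=
  fun b' => [set z | open_ideal N b' /\ exists b x, open_ideal N b /\
     (forall y, b y -> b' (D y)) /\ cval xi b x /\ b' (z - D x)].

Lemma Dh_ax (B : comPzRingType) (N : nat -> set B) (hB : lin_top N) (D : B -> B)
  (hadd : forall x y, D (x + y) = D x + D y)
  (hc : forall b', open_ideal N b' -> exists b, open_ideal N b /\ forall y, b y -> b' (D y))
  (xi : completion N) : cpl_ax N (Dh_fun D xi).
Proof.
split; [|split].
- by move=> b' nb; apply/seteqP; split=> z //= [].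
- move=> b' ob'; have [b [ob hb]] := hc b' ob'; have [x hx] := cval_ex xi ob.
  exists (D x); apply/seteqP; split=> z /=.
  + case=> _ [b2 [x2 [ob2 [hb2 [hx2 hz]]]]]; rewrite /coset /=.
    have [k [k1 k2]] := refine_oi hB ob ob2.
    have [x3 hx3] := cval_ex xi (oi_N hB k).
    have h1 : b (x - x3) := cval_diff ob hx (cval_mono (oi_N hB k) ob k1 hx3).
    have h2 : b2 (x2 - x3) := cval_diff ob2 hx2 (cval_mono (oi_N hB k) ob2 k2 hx3).
    have ib' : is_ideal b' by case: ob'.
    have -> : z - D x = (z - D x2) + (D (x2 - x3) - D (x - x3)).
      by rewrite !(DaddB hadd); ring.
    by apply: idealD => //; apply: idealB => //; [apply: hb2 | apply: hb].
  + by move=> hz; split=> //; exists b, x.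
- move=> b1 b2 ob1 ob2 s z [_ [b [x [ob [hb [hx hz]]]]]]; split=> //; exists b, x.
  by split=> //; split; [move=> y /hb; apply: s | split=> //; apply: s].
Qed.

Definition Dhat (B : comPzRingType) (N : nat -> set B) (hB : lin_top N) (D : B -> B)
  (hadd : forall x y, D (x + y) = D x + D y)
  (hc : forall b', open_ideal N b' -> exists b, open_ideal N b /\ forall y, b y -> b' (D y))
  (xi : completion N) : completion N := Cpl (Dh_ax hB hadd hc xi).

Lemma Dh_mem (B : comPzRingType) (N : nat -> set B) (hB : lin_top N) (D : B -> B)
  (hadd : forall x y, D (x + y) = D x + D y)
  (hc : forall b', open_ideal N b' -> exists b, open_ideal N b /\ forall y, b y -> b' (D y))
  (xi : completion N) b b' x :
  open_ideal N b' -> open_ideal N b -> (forall y, b y -> b' (D y)) -> cval xi b x ->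
  cval (Dhat hB hadd hc xi) b' (D x).
Proof.
move=> ob' ob hb hx; split=> //; exists b, x; do 3!split=> //.
by rewrite subrr; apply: ideal0; case: ob'.
Qed.

Lemma Dh_cont (B : comPzRingType) (N : nat -> set B) (hB : lin_top N) (D : B -> B)
  (hadd : forall x y, D (x + y) = D x + D y)
  (hc : forall b', open_ideal N b' -> exists b, open_ideal N b /\ forall y, b y -> b' (D y)) :
  lcontinuous (cpl_nbhd N) (cpl_nbhd N) (Dhat hB hadd hc).
Proof.
move=> xi b' [_ [n hn]]; have [c [[_ [m hm]] hc']] := hc (N n) (oi_N hB n).
exists (cpl_nbhd N m); split; first exact: cn_open.
move=> eta heta; apply: hn; rewrite /cpl_nbhd /=.
have om := oi_N hB m; have on := oi_N hB n.
have [y hy] := cval_ex eta om; have [x hx] := cval_ex xi om.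
have hyx : N m (y - x) := sub_cval heta hy hx.
have hD : forall w, N m w -> N n (D w) by move=> w /hm; apply: hc'.
have := memB on (Dh_mem hB hadd hc on om hD hy) (Dh_mem hB hadd hc on om hD hx).
move/cval_shift; apply; rewrite sub0r -(DaddB hadd); apply: idealN; first by case: on.
exact: hD.
Qed.

Lemma uniq_lem (B : comPzRingType) (N : nat -> set B) (hB : lin_top N)
  (F G : completion N -> completion N) (E : B -> B) :
  lcontinuous (cpl_nbhd N) (cpl_nbhd N) F -> lcontinuous (cpl_nbhd N) (cpl_nbhd N) G ->
  (forall x, F (cpl_map N x) = cpl_map N (E x)) ->
  (forall x, G (cpl_map N x) = cpl_map N (E x)) -> F = G.
Proof.
move=> hF hG hFc hGc; apply: funext => xi; apply: cpl_ext => b ob; case: (ob) => _ [p hp].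
have [c1 [[_ [m1 hm1]] h1]] := hF xi (cpl_nbhd N p) (cn_open hB p).
have [c2 [[_ [m2 hm2]] h2]] := hG xi (cpl_nbhd N p) (cn_open hB p).
have [k [k1 k2]] := refine_oi hB (oi_N hB m1) (oi_N hB m2).
have ok := oi_N hB k; have op := oi_N hB p.
have [x hx] := cval_ex xi ok.
have hx0 : cpl_nbhd N k (cpl_map N x - xi).
  rewrite /cpl_nbhd /=; apply: (cval_shift (memB ok (memc x ok) hx)).
  by rewrite subrr subr0; apply: ideal0; case: ok.
have := h1 _ (hm1 _ (cn_mono hB k1 hx0)); rewrite hFc /cpl_nbhd /= => e1.
have := h2 _ (hm2 _ (cn_mono hB k2 hx0)); rewrite hGc /cpl_nbhd /= => e2.
have [z hz] := cval_ex (G xi) op; have [w hw] := cval_ex (F xi) op.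
have f1 := sub_cval e1 (memc (E x) op) hw.
have f2 := sub_cval e2 (memc (E x) op) hz.
have ip : is_ideal (N p) by case: op.
exists z; split; last exact: (cval_mono op ob hp hz).
apply: (cval_mono op ob hp); apply: (cval_shift hw).
have -> : z - w = (E x - w) - (E x - z) by ring.
exact: idealB.
Qed.

Lemma Dh_int (B : comPzRingType) (N : nat -> set B) (hB : lin_top N) (D : nat -> B -> B)
  (hadd : forall i x y, D i (x + y) = D i x + D i y)
  (hc : forall i b', open_ideal N b' -> exists b, open_ideal N b /\ forall y, b y -> b' (D i y)) :
  top_integrable N D ->
  top_integrable (cpl_nbhd N) (fun i => Dhat hB (hadd i) (hc i)).
Proof.
move=> hint xi b' [_ [k hk]]; have ok := oi_N hB k.
have [b0 [n0 [[_ [m0 hm0]] h0]]] := hint 0 (N k) ok.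
have om := oi_N hB m0; have [x hx] := cval_ex xi om.
have [b1 [n1 [ob1 h1]]] := hint x (N k) ok.
exists (cpl_nbhd N m0), (maxn n0 n1); split; first exact: cn_open.
move=> n eta hn heta; apply: hk; rewrite /cpl_nbhd /=.
have [c [[_ [p hp]] hc']] := hc n (N k) ok.
have [j [j1 j2]] := refine_oi hB (oi_N hB p) om.
have oj := oi_N hB j; have [y hy] := cval_ex eta oj.
have hy' := cval_mono oj om j2 hy.
have hyx : N m0 (y - x) := sub_cval heta hy' hx.
have ik : is_ideal (N k) by case: ok.
have e1 : N k (D n (y - x)).
  apply: h0; first by apply: leq_trans hn; apply: leq_maxl.
  by rewrite subr0; apply: hm0.
have e2 : N k (D n x).
  apply: h1; first by apply: leq_trans hn; apply: leq_maxr.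
  by rewrite subrr; apply: ideal0; case: ob1.
have hm := Dh_mem hB (hadd n) (hc n) ok oj (fun w hw => hc' _ (hp _ (j1 _ hw))) hy.
apply: (cval_shift hm); rewrite sub0r; apply: idealN => //.
have -> : y = x + (y - x) by ring.
by rewrite hadd; apply: idealD.
Qed.

Lemma fin_ref (B : comPzRingType) (N : nat -> set B) (hB : lin_top N) (D : nat -> B -> B)
  (hc : forall i b', open_ideal N b' -> exists b, open_ideal N b /\ forall y, b y -> b' (D i y))
  b' : open_ideal N b' -> forall i, exists b, open_ideal N b /\
    forall k, (k <= i)%N -> forall y, b y -> b' (D k y).
Proof.
move=> ob'; elim=> [|i [b [ob hb]]].
  have [b [ob hb]] := hc 0%N b' ob'; exists b; split=> // k; rewrite leqn0 => /eqP ->.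
  exact: hb.
have [c [oc hc']] := hc i.+1 b' ob'.
have [m [m1 m2]] := refine_oi hB ob oc.
exists (N m); split; first exact: oi_N.
move=> k; rewrite leq_eqVlt => /orP [/eqP -> | ki] y hy; first by apply: hc'; apply: m2.
by apply: hb => //; apply: m1.
Qed.

Unset Implicit Arguments.
Set Strict Implicit.

Theorem lemma2p24 (A B : comPzRingType) (NA : nat -> set A) (NB : nat -> set B)
    (hA : lin_top NA) (hB : lin_top NB)
    (phi : {rmorphism A -> B}) (hphi : lcontinuous NA NB phi)
    (D : nat -> B -> B) (hD : cont_iter_higher_der NB phi D) :
  exists Dh : nat -> completion NB -> completion NB,
    (cont_iter_higher_der (cpl_nbhd NB) (fun a => cpl_map NB (phi a)) Dh /\
     (forall i x, Dh i (cpl_map NB x) = cpl_map NB (D i x))) /\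
    (forall Dh' : nat -> completion NB -> completion NB,
       cont_iter_higher_der (cpl_nbhd NB) (fun a => cpl_map NB (phi a)) Dh' ->
       (forall i x, Dh' i (cpl_map NB x) = cpl_map NB (D i x)) ->
       Dh' = Dh) /\
    (top_integrable NB D -> top_integrable (cpl_nbhd NB) Dh).
Proof.
case: hD => [[hadd [hmod [h0 [hleib hiter]]]] hcont].
have hc : forall i b', open_ideal NB b' ->
    exists b, open_ideal NB b /\ forall y, b y -> b' (D i y).
  move=> i b' ob'; have [b [ob hb]] := hcont i 0 b' ob'.
  exists b; split=> // y hy; have := hb y; rewrite subr0 (Dadd0 (hadd i)) subr0; exact.
pose Dh := fun i => Dhat hB (hadd i) (hc i).
have hDc : forall i x, Dh i (cpl_map NB x) = cpl_map NB (D i x).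
  move=> i x; apply: cpl_ext => b' ob'; have [b [ob hb]] := hc i b' ob'.
  exists (D i x); split; last exact: memc.
  exact: (Dh_mem hB (hadd i) (hc i) ob' ob hb (memc x ob)).
exists Dh; split; [split; [split|] | split].
- split; [|split; [|split; [|split]]].
  + move=> i xi eta; apply: cpl_ext => b' ob'; have [b [ob hb]] := hc i b' ob'.
    have [x hx] := cval_ex xi ob; have [y hy] := cval_ex eta ob.
    exists (D i (x + y)); split.
      exact: (Dh_mem hB (hadd i) (hc i) ob' ob hb (memD ob hx hy)).
    rewrite hadd; apply: memD => //; exact: (Dh_mem hB (hadd i) (hc i) ob' ob hb).
  + move=> i a xi; apply: cpl_ext => b' ob'; have [b [ob hb]] := hc i b' ob'.
    have [x hx] := cval_ex xi ob.
    exists (D i (phi a * x)); split.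
      exact: (Dh_mem hB (hadd i) (hc i) ob' ob hb (memM ob (memc (phi a) ob) hx)).
    rewrite hmod; apply: memM => //; first exact: memc.
    exact: (Dh_mem hB (hadd i) (hc i) ob' ob hb).
  + move=> xi; apply: cpl_ext => b ob; have [x hx] := cval_ex xi ob.
    exists x; split=> //; rewrite -{1}(h0 x).
    by apply: (Dh_mem hB (hadd 0%N) (hc 0%N) ob ob _ hx) => y; rewrite h0.
  + move=> i xi eta; apply: cpl_ext => b' ob'.
    have [b [ob hb]] := fin_ref hB hc ob' i.
    have [x hx] := cval_ex xi ob; have [y hy] := cval_ex eta ob.
    exists (D i (x * y)); split.
      exact: (Dh_mem hB (hadd i) (hc i) ob' ob (hb i (leqnn i)) (memM ob hx hy)).
    rewrite hleib; apply: mem_sum => // j; apply: memM => //.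
      apply: (Dh_mem hB (hadd j) (hc j) ob' ob (hb j _) hx).
      by rewrite -ltnS ltn_ord.
    by apply: (Dh_mem hB (hadd _) (hc _) ob' ob (hb _ _) hy); apply: leq_subr.
  + move=> i j xi; apply: cpl_ext => b' ob'.
    have [b1 [ob1 hb1]] := hc i b' ob'.
    have [b2 [ob2 hb2]] := hc j b1 ob1.
    have [b3 [ob3 hb3]] := hc (i + j)%N b' ob'.
    have [m [m2 m3]] := refine_oi hB ob2 ob3.
    have om := oi_N hB m; have [x hx] := cval_ex xi om.
    exists (D i (D j x)); split.
      apply: (Dh_mem hB (hadd i) (hc i) ob' ob1 hb1).
      exact: (Dh_mem hB (hadd j) (hc j) ob1 om (fun y hy => hb2 _ (m2 _ hy)) hx).
    rewrite hiter; apply: mem_muln => //.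
    exact: (Dh_mem hB (hadd _) (hc _) ob' om (fun y hy => hb3 _ (m3 _ hy)) hx).
- move=> i; exact: Dh_cont.
- exact: hDc.
- move=> Dh' [_ hc'] hDc'; apply: funext => i.
  apply: (uniq_lem hB (hc' i) (Dh_cont hB (hadd i) (hc i)) (hDc' i) (hDc i)).
- exact: Dh_int.
Qed.
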